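(* For $k=0,\dots,7$ let $v_k=(\cos(k\pi/4),\sin(k\pi/4))$ (indices mod 8), let $E_k$ be the segment $[v_k,v_{k+1}]$, and let $a_k=1.4\,(\cos((2k+1)\pi/8),\sin((2k+1)\pi/8))$. For $S\subset\{0,\dots,7\}$ let $C_S$ be the closed polygonal curve obtained from the boundary of the regular octagon $v_0v_1\cdots v_7$ by replacing each edge $E_k$ with $k\in S$ by the two segments $[v_k,a_k]\cup[a_k,v_{k+1}]$ (i.e., appending to the octagon congruent isosceles triangles on the edges indexed by $S$). Let $X=C_{\{0,4,5,7\}}$ and $Y=C_{\{0,1,4,7\}}$, each regarded as an mm-space $\mathcal{X},\mathcal{Y}$ with extrinsic Euclidean distance and normalized arclength measure. Then $X$ and $Y$ are not related by any rigid motion of $\mathbb{R}^2$ (so $\mathcal{X}\not\approx\mathcal{Y}$), but $H_{\mathcal{X}}=H_{\mathcal{Y}}$.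
   Context: For an mm-space $\mathcal{X}=(X,d_X,\mu_X)$ (compact metric space with fully supported Borel probability measure), the global distance distribution is $H_{\mathcal{X}}(r)=\mu_X\otimes\mu_X(\{(x,x')\in X\times X: d_X(x,x')\le r\})$ for $r\geq0$. A plane curve is regarded as an mm-space with the restriction of the Euclidean distance of $\mathbb{R}^2$ and arclength measure normalized to total mass one. *)

(* Defs.v *)
From Stdlib Require Import Reals Lra List Classical ClassicalEpsilon.
Import ListNotations.
Open Scope R_scope.

Definition point : Type := (R * R)%type.

Definition dist2 (p q : point) : R :=
  sqrt ((fst p - fst q) ^ 2 + (snd p - snd q) ^ 2).

(* Total Riemann integral: RiemannInt when f is Riemann integrable on [a,b], 0 otherwise. *)
Definition RInt (f : R -> R) (a b : R) : R :=
  match excluded_middle_informative (exists _ : Riemann_integrable f a b, True) with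
  | left h => RiemannInt (proj1_sig (constructive_indefinite_description _ h))
  | right _ => 0
  end.

Definition v (k : nat) : point :=
  (cos (INR k * PI / 4), sin (INR k * PI / 4)).
Definition apex (k : nat) : point :=
  (14 / 10 * cos ((2 * INR k + 1) * PI / 8), 14 / 10 * sin ((2 * INR k + 1) * PI / 8)).

Definition segments (S : nat -> bool) : list (point * point) :=
  flat_map (fun k => if S k then [(v k, apex k); (apex k, v (k + 1)%nat)]
                    else [(v k, v (k + 1)%nat)]) (seq 0 8).

Definition lerp (p q : point) (t : R) : point :=
  (fst p + t * (fst q - fst p), snd p + t * (snd q - snd p)).

Definition curve (S : nat -> bool) (x : point) : Prop :=
  exists pq, In pq (segments S) /\ exists t, 0 <= t <= 1 /\ x = lerp (fst pq) (snd pq) t.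

Definition seglen (pq : point * point) : R := dist2 (fst pq) (snd pq).

Definition curve_length (S : nat -> bool) : R :=
  fold_right Rplus 0 (map seglen (segments S)).

Definition ind_le (d r : R) : R := if Rle_dec d r then 1 else 0.

(* mu (x) mu of {(x,x') : |x - x'| <= r}, where mu = normalized arclength on C_S,
   computed as a sum over pairs of segments of (iterated) integrals over the
   linear parametrizations, weighted by the segment lengths. *)
Definition pair_mass (r : R) (e f : point * point) : R :=
  seglen e * seglen f *
  RInt (fun s => RInt (fun t =>
          ind_le (dist2 (lerp (fst e) (snd e) s) (lerp (fst f) (snd f) t)) r) 0 1) 0 1.

Definition H (S : nat -> bool) (r : R) : R :=
  fold_right Rplus 0
    (map (fun e => fold_right Rplus 0 (map (fun f => pair_mass r e f) (segments S)))
         (segments S)) / (curve_length S ^ 2).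

Definition SX (k : nat) : bool := (Nat.eqb k 0 || Nat.eqb k 4 || Nat.eqb k 5 || Nat.eqb k 7)%bool.
Definition SY (k : nat) : bool := (Nat.eqb k 0 || Nat.eqb k 1 || Nat.eqb k 4 || Nat.eqb k 7)%bool.

Definition isometry2 (g : point -> point) : Prop :=
  forall p q, dist2 (g p) (g q) = dist2 p q.

(* Main.v *)
Require Import Defs.
From Stdlib Require Import Reals Lra Lia List FunctionalExtensionality.
Import ListNotations.
Open Scope R_scope.


Local Notation sumL l := (fold_right Rplus 0 l).

Lemma sumL_app l1 l2 : sumL (l1 ++ l2) = sumL l1 + sumL l2.
Proof. induction l1; simpl; [ring| rewrite IHl1; ring]. Qed.

Lemma sum_flat_map {A B : Type} (g : B -> R) (h : A -> list B) l :
  sumL (map g (flat_map h l)) = sumL (map (fun k => sumL (map g (h k))) l).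
Proof. induction l as [|a l IH]; simpl; auto. rewrite map_app, sumL_app, IH; reflexivity. Qed.

Lemma sum_plus {A} (f g : A -> R) l :
  sumL (map (fun x => f x + g x) l) = sumL (map f l) + sumL (map g l).
Proof. induction l; simpl; [ring| rewrite IHl; ring]. Qed.

Lemma sum_zero {A} (l : list A) : sumL (map (fun _ => 0) l) = 0.
Proof. induction l; simpl; [ring| rewrite IHl; ring]. Qed.

Lemma sum_exchange {A B} (F : A -> B -> R) l1 l2 :
  sumL (map (fun x => sumL (map (F x) l2)) l1)
  = sumL (map (fun y => sumL (map (fun x => F x y) l1)) l2).
Proof. induction l1 as [|a l1 IH]; simpl.
 - symmetry; apply sum_zero.
 - rewrite IH, <- sum_plus. reflexivity. Qed.

Definition rot (m : nat) (p : point) : point :=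
  (cos (INR m * PI / 4) * fst p - sin (INR m * PI / 4) * snd p,
   sin (INR m * PI / 4) * fst p + cos (INR m * PI / 4) * snd p).
Definition rotp m (pq : point*point) : point*point := (rot m (fst pq), rot m (snd pq)).

Lemma rot_comp m n p : rot m (rot n p) = rot (n + m) p.
Proof. unfold rot; cbn [fst snd]. rewrite plus_INR.
 replace ((INR n + INR m) * PI / 4) with (INR n * PI/4 + INR m * PI/4) by field.
 rewrite cos_plus, sin_plus. f_equal; ring. Qed.

Lemma rot_period n p : rot (n + 8) p = rot n p.
Proof. unfold rot. rewrite plus_INR.
 replace ((INR n + INR 8) * PI / 4) with (INR n * PI / 4 + 2 * PI) by (simpl; field).
 rewrite cos_plus, sin_plus, cos_2PI, sin_2PI. f_equal; ring. Qed.

Lemma rot_mod n p : rot n p = rot (n mod 8) p.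
Proof. rewrite (Nat.div_mod_eq n 8) at 1. generalize (n / 8)%nat as q. induction q.
 - rewrite Nat.mul_0_r, Nat.add_0_l; reflexivity.
 - replace (8 * S q + n mod 8)%nat with ((8 * q + n mod 8) + 8)%nat by lia.
   rewrite rot_period; exact IHq. Qed.

Lemma rot0 p : rot 0 p = p.
Proof. unfold rot. replace (INR 0 * PI / 4) with 0 by (simpl; field).
 rewrite cos_0, sin_0. destruct p; cbn [fst snd]; f_equal; ring. Qed.

Lemma v_rot k : v k = rot k (1, 0).
Proof. unfold v, rot; cbn [fst snd]; f_equal; ring. Qed.

Lemma apex_rot k : apex k = rot k (apex 0).
Proof. unfold apex, rot; cbn [fst snd].
 replace ((2 * INR k + 1) * PI / 8) with (INR k * PI / 4 + (2 * INR 0 + 1) * PI / 8) by (simpl; field).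
 rewrite cos_plus, sin_plus. f_equal; ring. Qed.

Lemma rot_v m j : rot m (v j) = v (j + m).
Proof. rewrite !v_rot, rot_comp; reflexivity. Qed.

Lemma rot_apex m j : rot m (apex j) = apex (j + m).
Proof. rewrite (apex_rot j), (apex_rot (j+m)), rot_comp. reflexivity. Qed.

Lemma dist2_rot m p q : dist2 (rot m p) (rot m q) = dist2 p q.
Proof. unfold dist2, rot; cbn [fst snd]. f_equal.
 set (c := cos _). set (s := sin _).
 assert (E : s * s + c * c = 1) by (pose proof (sin2_cos2 (INR m * PI / 4)) as E; unfold Rsqr in E; exact E).
 transitivity ((s*s+c*c)*((fst p - fst q)^2 + (snd p - snd q)^2)); [ring| rewrite E; ring]. Qed.

Lemma lerp_rot m p q t : lerp (rot m p) (rot m q) t = rot m (lerp p q t).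
Proof. unfold lerp, rot; cbn [fst snd]; f_equal; ring. Qed.

Lemma seglen_rot m e : seglen (rotp m e) = seglen e.
Proof. unfold seglen, rotp; cbn [fst snd]; apply dist2_rot. Qed.

Lemma PM_rot r m e f : pair_mass r (rotp m e) (rotp m f) = pair_mass r e f.
Proof. unfold pair_mass. rewrite !seglen_rot. f_equal. unfold rotp; cbn [fst snd].
 f_equal. apply functional_extensionality; intro s. f_equal.
 apply functional_extensionality; intro t.
 rewrite !lerp_rot, dist2_rot. reflexivity. Qed.

Definition blk0 (b : bool) : list (point*point) :=
  if b then [(v 0, apex 0); (apex 0, v 1)] else [(v 0, v 1)].

Lemma segments_rot S : segments S = flat_map (fun k => map (rotp k) (blk0 (S k))) (seq 0 8).
Proof. unfold segments. apply flat_map_ext. intro k.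
 destruct (S k); unfold blk0, rotp; cbn [map fst snd]; rewrite ?rot_v, ?rot_apex;
 replace (1 + k)%nat with (k+1)%nat by lia; reflexivity. Qed.

Definition Bl r a b i j := sumL (map (fun e => sumL (map (fun f => pair_mass r e f)
   (map (rotp j) (blk0 b)))) (map (rotp i) (blk0 a))).

Lemma DS_decomp r S :
  sumL (map (fun e => sumL (map (fun f => pair_mass r e f) (segments S))) (segments S))
  = sumL (map (fun i => sumL (map (fun j => Bl r (S i) (S j) i j) (seq 0 8))) (seq 0 8)).
Proof.
 rewrite segments_rot.
 set (B := fun k => map (rotp k) (blk0 (S k))).
 rewrite (map_ext (fun e => sumL (map (fun f => pair_mass r e f) (flat_map B (seq 0 8))))
   (fun e => sumL (map (fun j => sumL (map (fun f => pair_mass r e f) (B j))) (seq 0 8))))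
   by (intro; apply sum_flat_map).
 rewrite sum_flat_map. f_equal. apply map_ext; intro i.
 etransitivity. apply (sum_exchange (fun e j => sumL (map (fun f => pair_mass r e f) (B j)))).
 reflexivity. Qed.

Lemma Bl_alt r a b i j : Bl r a b i j =
  sumL (map (fun e => sumL (map (fun f => pair_mass r (rotp i e) (rotp j f)) (blk0 b))) (blk0 a)).
Proof. unfold Bl. rewrite map_map. f_equal; apply map_ext; intro e; rewrite map_map; reflexivity. Qed.

Lemma rotp_comp m n e : rotp m (rotp n e) = rotp (n+m) e.
Proof. unfold rotp; cbn [fst snd]; rewrite !rot_comp; reflexivity. Qed.
Lemma rotp_mod n e : rotp n e = rotp (n mod 8) e.
Proof. unfold rotp; rewrite (rot_mod n (fst e)), (rot_mod n (snd e)). reflexivity. Qed.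
Lemma rotp0 e : rotp 0 e = e.
Proof. unfold rotp; rewrite !rot0; destruct e; reflexivity. Qed.

Lemma Bl_norm r a b i j : (i < 8)%nat -> Bl r a b i j = Bl r a b 0 ((j + 8 - i) mod 8).
Proof. intro Hi. rewrite !Bl_alt. f_equal. apply map_ext; intro e. f_equal. apply map_ext; intro f.
 rewrite rotp0. rewrite <- (PM_rot r i e). rewrite rotp_comp. f_equal.
 rewrite (rotp_mod j), (rotp_mod (_ + i)). f_equal.
 rewrite Nat.Div0.add_mod_idemp_l. replace (j + 8 - i + i)%nat with (j + 1*8)%nat by lia.
 rewrite Nat.Div0.mod_add. reflexivity. Qed.

Lemma DS_norm r S :
  sumL (map (fun e => sumL (map (fun f => pair_mass r e f) (segments S))) (segments S))
  = sumL (map (fun i => sumL (map (fun j => Bl r (S i) (S j) 0 ((j+8-i) mod 8)) (seq 0 8))) (seq 0 8)).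
Proof. rewrite DS_decomp. f_equal. apply map_ext_in; intros i Hi. apply in_seq in Hi.
 f_equal. apply map_ext; intro j. apply Bl_norm; lia. Qed.

Lemma comb2 (F : bool -> bool -> nat -> R) :
  sumL (map (fun i => sumL (map (fun j => F (SX i) (SX j) ((j+8-i) mod 8)) (seq 0 8))) (seq 0 8))
  = sumL (map (fun i => sumL (map (fun j => F (SY i) (SY j) ((j+8-i) mod 8)) (seq 0 8))) (seq 0 8)).
Proof. unfold SX, SY; simpl. ring. Qed.

Lemma CL_norm S : curve_length S = sumL (map (fun i => sumL (map seglen (blk0 (S i)))) (seq 0 8)).
Proof. unfold curve_length. rewrite segments_rot, sum_flat_map. f_equal. apply map_ext; intro i.
 rewrite map_map. f_equal. apply map_ext; intro e. apply seglen_rot. Qed.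

Lemma comb1 (G : bool -> R) :
  sumL (map (fun i => G (SX i)) (seq 0 8)) = sumL (map (fun i => G (SY i)) (seq 0 8)).
Proof. unfold SX, SY; simpl. ring. Qed.

Lemma part2 r : H SX r = H SY r.
Proof. unfold H. rewrite !DS_norm, !CL_norm.
 assert (E1 := comb2 (fun a b d => Bl r a b 0 d)).
 assert (E2 := comb1 (fun b => sumL (map seglen (blk0 b)))).
 cbv beta in E1, E2. rewrite E1, E2. reflexivity. Qed.

Definition nsq (p : point) := fst p ^ 2 + snd p ^ 2.
Definition dsq (p q : point) := (fst p - fst q)^2 + (snd p - snd q)^2.

Lemma pow_eq_zero x : x ^ 2 = 0 -> x = 0.
Proof. intro E. destruct (Req_dec x 0) as [h|h]; auto. exfalso; exact (pow_nonzero x 2 h E). Qed.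

Lemma iso_dsq g p q : isometry2 g -> dsq (g p) (g q) = dsq p q.
Proof. intro Hg. specialize (Hg p q). unfold dist2 in Hg. apply sqrt_inj in Hg; auto;
 apply Rplus_le_le_0_compat; apply pow2_ge_0. Qed.

Lemma nsq_lerp p q t : nsq (lerp p q t) = (1-t)*nsq p + t*nsq q - t*(1-t)*dsq p q.
Proof. unfold nsq, lerp, dsq; cbn [fst snd]; ring. Qed.
Lemma lerp0 p q : lerp p q 0 = p.
Proof. destruct p; unfold lerp; cbn; f_equal; ring. Qed.
Lemma lerp1 p q : lerp p q 1 = q.
Proof. destruct p, q; unfold lerp; cbn; f_equal; ring. Qed.

Lemma nsq_v k : nsq (v k) = 1.
Proof. unfold nsq, v; cbn [fst snd].
 pose proof (sin2_cos2 (INR k * PI / 4)) as E; unfold Rsqr in E.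
 rewrite <- E. ring. Qed.

Lemma nsq_apex k : nsq (apex k) = 196/100.
Proof. unfold nsq, apex; cbn [fst snd].
 pose proof (sin2_cos2 ((2 * INR k + 1) * PI / 8)) as E; unfold Rsqr in E.
 transitivity ((14/10)^2 * (sin ((2 * INR k + 1) * PI / 8) * sin ((2 * INR k + 1) * PI / 8)
    + cos ((2 * INR k + 1) * PI / 8) * cos ((2 * INR k + 1) * PI / 8))); [ring| rewrite E; field]. Qed.

Lemma curve_bound S x : curve S x -> nsq x <= 196/100 /\
  (196/100 <= nsq x -> exists k, (k < 8)%nat /\ S k = true /\ x = apex k).
Proof.
 intros [[p q] [Hin [t [Ht ->]]]]. cbn [fst snd] in *.
 unfold segments in Hin. apply in_flat_map in Hin. destruct Hin as [k [Hk Hin]]. apply in_seq in Hk.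
 rewrite nsq_lerp.
 assert (Hd : 0 <= t*(1-t)*dsq p q).
 { apply Rmult_le_pos. apply Rmult_le_pos; lra. unfold dsq; apply Rplus_le_le_0_compat; apply pow2_ge_0. }
 destruct (S k) eqn:ES; simpl in Hin.
 - destruct Hin as [E|[E|[]]]; injection E as <- <-; rewrite ?nsq_v, ?nsq_apex in *; split; try lra; intro Hge.
   + assert (t = 1) by lra. subst t. rewrite lerp1. exists k; repeat split; auto; lia.
   + assert (t = 0) by lra. subst t. rewrite lerp0. exists k; repeat split; auto; lia.
 - destruct Hin as [E|[]]; injection E as <- <-. rewrite !nsq_v. split; intros; lra. Qed.

Lemma far S x y : curve S x -> curve S y -> 784/100 <= dsq x y ->
  196/100 <= nsq x /\ 196/100 <= nsq y /\ fst y = - fst x /\ snd y = - snd x.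
Proof. intros Hx Hy Hd. destruct (curve_bound S x Hx) as [Bx _]. destruct (curve_bound S y Hy) as [By _].
 unfold nsq, dsq in *. destruct x as [x1 x2], y as [y1 y2]; cbn [fst snd] in *.
 assert (I: (x1-y1)^2 + (x2-y2)^2 + ((x1+y1)^2 + (x2+y2)^2) = 2*(x1^2+x2^2) + 2*(y1^2+y2^2)) by ring.
 pose proof (pow2_ge_0 (x1+y1)). pose proof (pow2_ge_0 (x2+y2)).
 assert (E1 : (x1+y1)^2 = 0) by lra. assert (E2 : (x2+y2)^2 = 0) by lra.
 apply pow_eq_zero in E1. apply pow_eq_zero in E2.
 repeat split; lra. Qed.

Lemma apex4_neg : fst (apex 4) = - fst (apex 0) /\ snd (apex 4) = - snd (apex 0).
Proof. unfold apex; cbn [fst snd].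
 replace ((2 * INR 4 + 1) * PI / 8) with ((2*INR 0+1)*PI/8 + PI) by (simpl; field).
 rewrite neg_cos, neg_sin. split; ring. Qed.

Definition s2 := cos (PI/4).
Definition cval (d : nat) : R := match d with 0 => 1 | 1 => s2 | 2 => 0 | 3 => - s2
  | 4 => -1 | 5 => -s2 | 6 => 0 | _ => s2 end.

Lemma cos_tab d : (d < 8)%nat -> cos (INR d * PI / 4) = cval d.
Proof. intro Hd. unfold cval, s2.
 destruct d as [|[|[|[|[|[|[|[|d]]]]]]]].
 - replace (INR 0 * PI/4) with 0 by (simpl; field). apply cos_0.
 - replace (INR 1 * PI/4) with (PI/4) by (simpl; field). reflexivity.
 - replace (INR 2 * PI/4) with (PI/2) by (simpl; field). apply cos_PI2.
 - replace (INR 3 * PI/4) with (PI/4 + PI/2) by (simpl; field).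
   rewrite cos_plus, cos_PI2, sin_PI2, sin_PI4, cos_PI4; ring.
 - replace (INR 4 * PI/4) with PI by (simpl; field). apply cos_PI.
 - replace (INR 5 * PI/4) with (PI/4 + PI) by (simpl; field). apply neg_cos.
 - replace (INR 6 * PI/4) with (PI/2 + PI) by (simpl; field). rewrite neg_cos, cos_PI2; ring.
 - replace (INR 7 * PI/4) with ((PI/4 + PI/2) + PI) by (simpl; field).
   rewrite neg_cos, cos_plus, cos_PI2, sin_PI2, sin_PI4, cos_PI4; ring.
 - lia. Qed.

Lemma apex_dsq_cos i j : dsq (apex i) (apex j) =
  392/100 * (1 - cos ((2*INR i+1)*PI/8 - (2*INR j+1)*PI/8)).
Proof. unfold dsq, apex; cbn [fst snd]. rewrite cos_minus.
 set (a := (2*INR i+1)*PI/8). set (b := (2*INR j+1)*PI/8).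
 pose proof (sin2_cos2 a) as Ea; pose proof (sin2_cos2 b) as Eb; unfold Rsqr in Ea, Eb.
 transitivity ((14/10)^2 * ((sin a * sin a + cos a * cos a) + (sin b * sin b + cos b * cos b)
   - 2 * (cos a * cos b + sin a * sin b))); [ring| rewrite Ea, Eb; field]. Qed.

Lemma apex_tab i j : dsq (apex i) (apex j) = 392/100 * (1 - cos (INR ((i - j) + (j - i)) * PI / 4)).
Proof. rewrite apex_dsq_cos. destruct (Nat.le_ge_cases j i) as [Hl|Hl].
 - replace ((j - i)%nat) with 0%nat by lia. rewrite Nat.add_0_r, minus_INR by lia.
   do 3 f_equal; field.
 - replace ((i - j)%nat) with 0%nat by lia. rewrite Nat.add_0_l, minus_INR by lia.
   rewrite <- cos_neg. do 3 f_equal; field. Qed.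

Lemma apex_tab2 i j : (i < 8)%nat -> (j < 8)%nat ->
  dsq (apex i) (apex j) = 392/100 * (1 - cval ((i - j) + (j - i))).
Proof. intros. rewrite apex_tab, cos_tab by lia. reflexivity. Qed.

Lemma s2_bounds : 0 < s2 < 1.
Proof. unfold s2. rewrite cos_PI4.
 assert (1 < sqrt 2) by (rewrite <- sqrt_1; apply sqrt_lt_1; lra).
 assert (E : 1 / sqrt 2 * sqrt 2 = 1) by (field; lra).
 split; nra. Qed.

Lemma apex_in S k : S k = true -> (k < 8)%nat -> curve S (apex k).
Proof. intros Hk Hk8. exists (v k, apex k). split.
 - unfold segments; apply in_flat_map; exists k; split; [apply in_seq; lia| rewrite Hk; left; reflexivity].
 - exists 1; split; [lra| symmetry; apply lerp1]. Qed.

Lemma SX_cases k : (k < 8)%nat -> SX k = true -> k = 0%nat \/ k = 4%nat \/ k = 5%nat \/ k = 7%nat.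
Proof. intros Hk. unfold SX.
 destruct k as [|[|[|[|[|[|[|[|k]]]]]]]]; simpl; intros; try discriminate; auto; lia. Qed.

Lemma part1 g : isometry2 g -> ~ (forall y, curve SY y <-> exists x, curve SX x /\ g x = y).
Proof.
 intros Hg Heq.
 destruct (proj1 (Heq (apex 0)) (apex_in SY 0 eq_refl ltac:(lia))) as [x0 [C0 G0]].
 destruct (proj1 (Heq (apex 4)) (apex_in SY 4 eq_refl ltac:(lia))) as [x4 [C4 G4]].
 destruct (proj1 (Heq (apex 1)) (apex_in SY 1 eq_refl ltac:(lia))) as [x1 [C1 G1]].
 destruct (proj1 (Heq (apex 7)) (apex_in SY 7 eq_refl ltac:(lia))) as [x7 [C7 G7]].
 assert (D04 : dsq x0 x4 = 784/100).
 { rewrite <- (iso_dsq g x0 x4 Hg), G0, G4. rewrite apex_tab2 by lia. cbv [cval Nat.sub Nat.add]. lra. }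
 destruct (far SX x0 x4 C0 C4 ltac:(lra)) as [N0 [N4 [F1 F2]]].
 destruct (curve_bound SX x0 C0) as [B0 K0].
 destruct (curve_bound SX x4 C4) as [B4 _].
 assert (Z0: dsq (g (0,0)) (apex 0) = 196/100).
 { rewrite <- G0, iso_dsq by auto. unfold dsq, nsq in *; cbn [fst snd]. lra. }
 assert (Z4: dsq (g (0,0)) (apex 4) = 196/100).
 { rewrite <- G4, iso_dsq by auto. unfold dsq, nsq in *; cbn [fst snd]. lra. }
 assert (Z : fst (g (0,0)) = 0 /\ snd (g (0,0)) = 0).
 { destruct apex4_neg as [A1 A2]. pose proof (nsq_apex 0) as NA.
   unfold dsq, nsq in *. rewrite A1, A2 in Z4.
   destruct (g (0,0)) as [z1 z2]; cbn [fst snd] in *.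
   assert (E: z1^2 + z2^2 = 0) by nra.
   pose proof (pow2_ge_0 z1); pose proof (pow2_ge_0 z2).
   assert (E1 : z1^2 = 0) by lra. assert (E2 : z2^2 = 0) by lra.
   apply pow_eq_zero in E1; apply pow_eq_zero in E2. auto. }
 assert (NG : forall x, nsq (g x) = nsq x).
 { intro x. pose proof (iso_dsq g x (0,0) Hg) as E. destruct Z as [Z1 Z2].
   unfold dsq, nsq in *. rewrite Z1, Z2 in E. cbn [fst snd] in E. lra. }
 destruct (K0 N0) as [k0 [Hk0 [S0 ->]]].
 destruct (curve_bound SX x1 C1) as [_ K1].
 destruct (K1 ltac:(rewrite <- NG, G1, nsq_apex; lra)) as [k1 [Hk1 [S1 ->]]].
 destruct (curve_bound SX x7 C7) as [_ K7].
 destruct (K7 ltac:(rewrite <- NG, G7, nsq_apex; lra)) as [k7 [Hk7 [S7 ->]]].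
 assert (D01 : dsq (apex k0) (apex k1) = 392/100 * (1 - s2)).
 { rewrite <- (iso_dsq g _ _ Hg), G0, G1, apex_tab2 by lia. reflexivity. }
 assert (D07 : dsq (apex k0) (apex k7) = 392/100 * (1 - s2)).
 { rewrite <- (iso_dsq g _ _ Hg), G0, G7, apex_tab2 by lia. reflexivity. }
 assert (D17 : dsq (apex k1) (apex k7) = 392/100).
 { rewrite <- (iso_dsq g _ _ Hg), G1, G7, apex_tab2 by lia. cbv [cval Nat.sub Nat.add]. ring. }
 rewrite apex_tab2 in D01, D07, D17 by lia.
 pose proof s2_bounds.
 destruct (SX_cases k0 Hk0 S0) as [-> | [-> | [-> | ->]]];
 destruct (SX_cases k1 Hk1 S1) as [-> | [-> | [-> | ->]]];
 destruct (SX_cases k7 Hk7 S7) as [-> | [-> | [-> | ->]]];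
 cbv [cval Nat.sub Nat.add] in D01, D07, D17; lra.
Qed.

Theorem proposition5p4 :
  (forall g : point -> point, isometry2 g ->
     ~ (forall y, curve SY y <-> exists x, curve SX x /\ g x = y)) /\
  (forall r : R, 0 <= r -> H SX r = H SY r).
Proof.
  split.
  - exact part1.
  - intros r _. apply part2.
Qed.
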